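(* Let $A=[a_{ij}]\in\{0,1\}^{N\times N}$ be the adjacency matrix of a static contact graph on nodes $\{1,\dots,N\}$ (with $a_{ii}=0$) and let $\rho(A)$ be its spectral radius. Let $\beta_0>0$, $\delta>0$, $\kappa>0$, $0\le\beta_a<\beta_0$, and define \[ \beta_{eq}=\beta_0\frac{\beta_a/\kappa}{1+\beta_a/\kappa}+\beta_a\frac{1}{1+\beta_a/\kappa}. \] Consider the SAIS system \[ \dot p_i=\beta_0(1-p_i-q_i)\sum_{j=1}^N a_{ij}p_j+\beta_a q_i\sum_{j=1}^N a_{ij}p_j-\delta p_i,\qquad \dot q_i=\kappa(1-p_i-q_i)\sum_{j=1}^N a_{ij}p_j-\beta_a q_i\sum_{j=1}^N a_{ij}p_j, \] $i\in\{1,\dots,N\}$. If $\frac{\beta_{eq}}{\delta}<\frac{1}{\rho(A)}$, then small initial infections die out asymptotically, i.e. $p_i(t)\to0$ as $t\to\infty$ for all $i$.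
   Context: $p_i$ and $q_i$ are the (mean-field) probabilities that individual $i$ is infected and alert; $a_{ij}=1$ iff individual $j$ is a neighbor of individual $i$. $\beta_0$: infection rate of susceptible individuals; $\beta_a$: infection rate of alert individuals; $\kappa$: alerting rate; $\delta$: curing rate. ''Small initial infections'' refers to initial conditions near the infection-free equilibrium set (local result). *)

(* Defs.v *)
From HB Require Import structures.
From mathcomp Require Import all_boot all_order all_algebra.
From mathcomp Require Import all_classical all_reals all_analysis.
From mathcomp Require complex.
Import complex.ComplexField.
Set Implicit Arguments. Unset Strict Implicit. Unset Printing Implicit Defensive.
Import Order.TTheory GRing.Theory Num.Theory.
Import numFieldNormedType.Exports.
Local Open Scope classical_set_scope.
Local Open Scope ring_scope.

Definition spectral_radius (R : realType) (N : nat) (A : 'M[R]_N) : R :=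
  sup [set complex.Re `|l| | l in
        [set l : complex.complex R |
          eigenvalue (map_mx (fun x : R => complex.real_complex R x) A) l]].

Definition adjacency01 (R : realType) (N : nat) (A : 'M[R]_N) : Prop :=
  (forall i j, A i j = 0 \/ A i j = 1) /\ (forall i, A i i = 0).

Definition beta_eq (R : realType) (beta0 betaa kappa : R) : R :=
  beta0 * ((betaa / kappa) / (1 + betaa / kappa))
  + betaa * (1 / (1 + betaa / kappa)).

Definition SAIS_solution (R : realType) (N : nat) (A : 'M[R]_N)
    (beta0 betaa kappa delta : R) (p q : R -> 'I_N -> R) : Prop :=
  forall i : 'I_N,
    {within `[0, +oo[, continuous (fun t => p t i)} /\
    {within `[0, +oo[, continuous (fun t => q t i)} /\
    (forall t : R, 0 < t ->
       is_derive t 1 (fun s => p s i)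
         (beta0 * (1 - p t i - q t i) * (\sum_(j < N) A i j * p t j)
          + betaa * q t i * (\sum_(j < N) A i j * p t j)
          - delta * p t i)) /\
    (forall t : R, 0 < t ->
       is_derive t 1 (fun s => q s i)
         (kappa * (1 - p t i - q t i) * (\sum_(j < N) A i j * p t j)
          - betaa * q t i * (\sum_(j < N) A i j * p t j))).

(* Feasible state: p_i, q_i are probabilities of disjoint events. *)
Definition feasible_state (R : realType) (N : nat) (p0 q0 : 'I_N -> R) : Prop :=
  forall i, 0 <= p0 i /\ 0 <= q0 i /\ p0 i + q0 i <= 1.

(* Main.v *)
Require Import Defs.
From HB Require Import structures.
From mathcomp Require Import all_boot all_order all_algebra.
From mathcomp Require Import all_classical all_reals all_analysis.
From mathcomp Require Import complex.
From mathcomp Require Import ring lra.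
Import Order.TTheory GRing.Theory Num.Theory.
Import numFieldNormedType.Exports.
Local Open Scope classical_set_scope.
Local Open Scope ring_scope.
Section Aux.
Variable R : realType.

Lemma within_lt (f : R -> R) (a b c y : R) :
  {within `[a, b], continuous f} -> c \in `[a, b] -> f c < y ->
  exists2 d : R, 0 < d & forall u, u \in `[a, b] -> `|u - c| < d -> f u < y.
Proof.
move=> cf cab fcy.
have := @cvgr_lt _ _ _ _ (f : subspace `[a, b] -> R) (f c) (cf c) y fcy.
rewrite /prop_near1 /nbhs /=. rewrite -nbhs_subspace_in; last by rewrite inE in cab.
move=> /(_ (within_filter _ _)); rewrite /within /=.
move=> [d d0 H2]; exists d => // u uab ud.
by apply: H2 => //; rewrite /ball_ /= distrC.
Qed.

Lemma within_gt (f : R -> R) (a b c y : R) :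
  {within `[a, b], continuous f} -> c \in `[a, b] -> y < f c ->
  exists2 d : R, 0 < d & forall u, u \in `[a, b] -> `|u - c| < d -> y < f u.
Proof.
move=> cf cab fcy.
have cf' : {within `[a, b], continuous (fun x => - f x)}.
  by move=> x; apply: continuousN; exact: cf.
have [|d d0 H] := @within_lt (fun x => - f x) a b c (- y) cf' cab; first by rewrite ltrN2.
by exists d => // u uab ud; rewrite -ltrN2; exact: H.
Qed.

Lemma sub_cc (a b c d : R) : a <= c -> d <= b -> `[c, d] `<=` `[a, b].
Proof.
move=> ac db x; rewrite /= !in_itv /= => /andP[cx xd].
by rewrite (le_trans ac cx) (le_trans xd db).
Qed.

Lemma last_zero (f : R -> R) a b : a <= b -> {within `[a, b], continuous f} ->
  f a <= 0 -> 0 < f b ->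
  exists c, [/\ a <= c, c < b, f c = 0 & forall u, c < u -> u <= b -> 0 < f u].
Proof.
move=> ab cf fa fb.
pose S := [set u | a <= u /\ u <= b /\ f u <= 0].
have Sa : S a by rewrite /S /= lexx ab fa.
have hS : has_sup S.
  by split; [exists a | exists b => u [_ []]].
set c := sup S.
have ac : a <= c by exact: sup_upper_bound.
have cb : c <= b by apply: sup_le_ub; [exists a | move=> u [_ []]].
have cab : c \in `[a, b] by rewrite in_itv /= ac cb.
have Sle u : S u -> u <= c by move=> Su; exact: sup_upper_bound.
have fc0 : f c = 0.
  case: (ltgtP (f c) 0) => // [fcn|fcp].
  - have cltb : c < b by rewrite lt_neqAle cb andbT; apply/eqP => ceb; move: fcn; rewrite ceb ltNge (ltW fb).
    have cf2 : {within `[c, b], continuous f}.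
      by apply: (continuous_subspaceW _ cf); apply: sub_cc.
    have [|c' c'in fc'] := IVT (v := 0) cb cf2.
      by rewrite ge_min le_max (ltW fcn) (ltW fb) orbT.
    have Sc' : S c'.
      by move: c'in; rewrite in_itv /= => /andP[cc' c'b]; rewrite /S /= fc' lexx c'b (le_trans ac cc').
    have := Sle _ Sc'; move: c'in; rewrite in_itv /= => /andP[cc' _] c'c.
    have ec : c' = c by apply/eqP; rewrite eq_le cc' c'c.
    by move: fc'; rewrite ec => fc0; move: fcn; rewrite fc0 ltxx.
  - have [d d0 H] := @within_gt f a b c 0 cf cab fcp.
    have [e Se ce] := sup_adherent d0 hS.
    have ec := Sle _ Se.
    move: Se => [ae [eb fe]].
    have : 0 < f e.
      apply: H; first by rewrite in_itv /= ae eb.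
      by rewrite ler0_norm ?subr_le0 // opprB ltrBlDr addrC -ltrBlDr.
    by rewrite ltNge fe.
have cltb : c < b.
  by rewrite lt_neqAle cb andbT; apply/eqP => ceb; move: fb; rewrite -ceb fc0 ltxx.
exists c; split => // u cu ub.
rewrite ltNge; apply/negP => fu.
have : S u by rewrite /S /= ub fu (le_trans ac (ltW cu)).
by move/Sle; rewrite leNgt cu.
Qed.

Lemma cont_sum_seq (T : topologicalType) (I : Type) (s : seq I) (F : I -> T -> R) (x : T) :
  (forall i, {for x, continuous (F i)}) ->
  {for x, continuous (fun t => \sum_(i <- s) F i t)}.
Proof.
move=> cF; elim: s => [|a s IH].
  have -> : (fun t => \sum_(i <- [::]) F i t) = (fun=> 0) by apply: funext => t; rewrite big_nil.
  exact: cst_continuous.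
have -> : (fun t => \sum_(i <- a :: s) F i t) = (F a + (fun t => \sum_(i <- s) F i t)).
  by apply: funext => t; rewrite big_cons.
exact: continuousD.
Qed.

Lemma cont_sum (T : topologicalType) (K : finType) (F : K -> T -> R) (x : T) :
  (forall i, {for x, continuous (F i)}) ->
  {for x, continuous (fun t => \sum_(i : K) F i t)}.
Proof. exact: cont_sum_seq. Qed.

Lemma deriv_cont (f : R -> R) (t df : R) : is_derive t 1 f df -> {for t, continuous f}.
Proof. by move=> [d _]; apply: differentiable_continuous; apply/derivable1_diffP. Qed.

Definition negp (y : R) := Num.max 0 (- y).

Lemma negp_ge0 y : 0 <= negp y.
Proof. by rewrite /negp le_max lexx. Qed.

Lemma negp0 y : 0 <= y -> negp y = 0.
Proof. by move=> y0; rewrite /negp max_l // oppr_le0. Qed.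

Lemma negpN y : y < 0 -> negp y = - y.
Proof. by move=> y0; rewrite /negp max_r // oppr_ge0 ltW. Qed.

Lemma negp_ge y : - negp y <= y.
Proof. by rewrite /negp lerNl le_max lexx orbT. Qed.

Lemma negp_le y m : - m <= y -> 0 <= m -> negp y <= m.
Proof. by move=> ym m0; rewrite /negp ge_max m0 lerNl. Qed.

Lemma cont_negp (T : topologicalType) (f : T -> R) x :
  {for x, continuous f} -> {for x, continuous (fun t => negp (f t))}.
Proof.
move=> cf.
have -> : (fun t => negp (f t)) = ((fun=> 0) \max (fun t => - f t)) by [].
apply: continuous_max; first exact: cst_continuous.
exact: continuousN.
Qed.

Lemma ge_min_l (x y : R) : Num.min x y <= x. Proof. by rewrite ge_min lexx. Qed.
Lemma ge_min_r (x y : R) : Num.min x y <= y. Proof. by rewrite ge_min lexx orbT. Qed.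

Lemma invariance (K : finType) (x dx : K -> R -> R) (L : R) :
  0 <= L ->
  (forall k, {within `[0, +oo[, continuous (x k)}) ->
  (forall k (t : R), 0 < t -> is_derive t 1 (x k) (dx k t)) ->
  (forall k, 0 <= x k 0) ->
  (forall t : R, 0 < t -> (forall j, -1 <= x j t) -> forall k, x k t < 0 ->
       - (L * \sum_j negp (x j t)) <= dx k t) ->
  forall k t, 0 <= t -> 0 <= x k t.
Proof.
move=> L0 cx dx0 x0 Hb k1 t1 t10.
rewrite leNgt; apply/negP => xneg.
have t1pos : 0 < t1.
  rewrite lt_neqAle t10 andbT; apply/eqP => t1e; move: xneg; rewrite -t1e ltNge x0.
  by [].
pose n t := \sum_j negp (x j t).
have n_ge0 t : 0 <= n t by apply: sumr_ge0 => j _; exact: negp_ge0.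
have negp_le_n j t : negp (x j t) <= n t.
  by rewrite /n (bigD1 j) //= lerDl; apply: sumr_ge0 => i _; exact: negp_ge0.
have cx_sub a b : 0 <= a -> forall k, {within `[a, b], continuous (x k)}.
  move=> a0 k; apply: (continuous_subspaceW _ (cx k)) => u; rewrite /= !in_itv /= andbT.
  by move=> /andP[au _]; exact: le_trans au.
have cn a b : 0 <= a -> {within `[a, b], continuous n}.
  move=> a0 u; apply: cont_sum => j; apply: cont_negp; exact: cx_sub.
have [u0 [u00 u0t1 nu0 npos]] : exists u0, [/\ 0 <= u0, u0 < t1, n u0 = 0 &
    forall u, u0 < u -> u <= t1 -> 0 < n u].
  apply: last_zero => //; first exact: cn.
  - by rewrite /n big1 // => j _; rewrite negp0.
  - by apply: lt_le_trans (negp_le_n k1 t1); rewrite negpN // oppr_gt0.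
have xu0 j : 0 <= x j u0.
  have : negp (x j u0) = 0.
    by apply: (psumr_eq0P (P := predT) (fun i _ => negp_ge0 (x i u0)) nu0).
  case: (leP 0 (x j u0)) => // xn; rewrite negpN // => /eqP.
  by rewrite oppr_eq0 lt_eqF.
have u0in : u0 \in `[0, t1] by rewrite in_itv /= u00 ltW.
have := @within_lt n 0 t1 u0 1 (cn 0 t1 (lexx 0)) u0in.
rewrite nu0 ltr01 => /(_ isT) [d1 d10 Hd1].
pose KL := L * (#|K|%:R).
have KL0 : 0 <= KL by rewrite mulr_ge0.
pose del := Num.min (Num.min (d1 / 2) (t1 - u0)) (1 / (2 * (KL + 1))).
have del0 : 0 < del.
  rewrite !lt_min divr_gt0 //= ?subr_gt0 // u0t1 /= divr_gt0 //.
  by rewrite mulr_gt0 // ltr_pwDr.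
have deld1 : del < d1.
  apply: (le_lt_trans (ge_min_l _ _)); apply: (le_lt_trans (ge_min_l _ _)).
  by lra.
have delt : u0 + del <= t1.
  by rewrite -lerBrDl; apply: (le_trans (ge_min_l _ _)); exact: ge_min_r.
have delKL : KL * del < 1.
  have : del <= 1 / (2 * (KL + 1)) by exact: ge_min_r.
  move=> h; apply: (le_lt_trans (ler_wpM2l KL0 h)).
  rewrite mul1r ltr_pdivrMr ?mulr_gt0 ?ltr_pwDr // mul1r.
  by nra.
pose b := u0 + del.
have u0b : u0 <= b by rewrite /b lerDl ltW.
have n_lt1 u : u \in `[u0, b] -> n u < 1.
  rewrite in_itv /= => /andP[u0u ub]; apply: Hd1.
    by rewrite in_itv /= (le_trans u00 u0u) (le_trans ub delt).
  by rewrite ger0_norm ?subr_ge0 // ltrBlDl (le_lt_trans ub) // ltrD2l.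
have [c cin cmax] := EVT_max u0b (cn u0 b u00).
set M := n c.
have Mpos : 0 < M.
  apply: (lt_le_trans _ (cmax b _)); last by rewrite in_itv /= u0b lexx.
  by apply: npos; rewrite ?delt // /b ltrDl.
have claim k u : u \in `[u0, b] -> - (L * M * del) <= x k u.
  move=> uin; have LMd : 0 <= L * M * del by rewrite !mulr_ge0 // ltW.
  case: (leP 0 (x k u)) => [xk0|xkn]; first by apply: le_trans xk0; rewrite oppr_le0.
  move: (uin); rewrite in_itv /= => /andP[u0u ub].
  have u0lu : u0 < u.
    by rewrite lt_neqAle u0u andbT; apply/eqP => e; move: xkn; rewrite -e ltNge xu0.
  have cnx : {within `[u0, u], continuous (fun t => - x k t)}.
    by move=> v; apply: continuousN; exact: cx_sub.
  have := @last_zero (fun t => - x k t) u0 u (ltW u0lu) cnx.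
  rewrite oppr_le0 xu0 oppr_gt0 xkn => /(_ isT isT) [c' [u0c' c'u xc' Hneg]].
  have xc'0 : x k c' = 0 by apply/eqP; rewrite -oppr_eq0 xc'.
  have hd : forall v, v \in `]c', u[ -> is_derive v 1 (x k) (dx k v).
    move=> v; rewrite in_itv /= => /andP[c'v _]; apply: dx0.
    exact: le_lt_trans (le_trans u00 u0c') c'v.
  have [xi xiin eqxi] := @MVT R (x k) (dx k) c' u c'u hd
      (cx_sub c' u (le_trans u00 u0c') k).
  move: xiin; rewrite in_itv /= => /andP[c'xi xiu].
  have xi0 : 0 < xi by exact: le_lt_trans (le_trans u00 u0c') c'xi.
  have xixin : xi \in `[u0, b].
    by rewrite in_itv /= (le_trans u0c' (ltW c'xi)) (le_trans (ltW xiu) ub).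
  have nxi1 := n_lt1 _ xixin.
  have vars j : -1 <= x j xi.
    have h1 := negp_ge (x j xi); have h2 := negp_le_n j xi; lra.
  have xkxi : x k xi < 0 by rewrite -oppr_gt0; exact: (Hneg _ c'xi (ltW xiu)).
  have dxb := Hb xi xi0 vars k xkxi.
  have nxiM : n xi <= M := cmax xi xixin.
  move: eqxi; rewrite xc'0 subr0 => ->.
  have ucd : u - c' <= del by rewrite /b in ub; lra.
  have ucd0 : 0 <= u - c' by lra.
  have h1 : - (L * M) <= dx k xi.
    apply: le_trans dxb; rewrite lerN2; exact: ler_wpM2l.
  have LM0 : 0 <= L * M by rewrite mulr_ge0 // ltW.
  nra.
have hs : n c <= \sum_(k : K) (L * M * del).
  apply: ler_sum => k _; apply: negp_le (claim k c cin) _.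
  by rewrite !mulr_ge0 // ltW.
rewrite sumr_const -mulr_natr -/M in hs.
have : M <= KL * del * M.
  by apply: (le_trans hs); rewrite /KL le_eqVlt; apply/orP; left; apply/eqP; ring.
nra.
Qed.
End Aux.
Section LA.
Variable R : realType.

Lemma bigmin_attained (I : Type) (s : seq I) (F : I -> R) x0 :
  \big[Order.min/x0]_(i <- s) F i = x0 \/ exists i, \big[Order.min/x0]_(i <- s) F i = F i.
Proof.
elim: s => [|a s IH]; first by left; rewrite big_nil.
rewrite big_cons; set m := \big[Order.min/x0]_(i <- s) F i in IH *.
rewrite /Order.min; case: ifP => _; first by right; exists a.
by case: IH => [->|[i ->]]; [left|right; exists i].
Qed.

Lemma cont_bigmin (T : topologicalType) (I : Type) (s : seq I) (F : I -> T -> R) x0 x :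
  (forall i, {for x, continuous (F i)}) ->
  {for x, continuous (fun t => \big[Order.min/x0]_(i <- s) F i t)}.
Proof.
move=> cF; elim: s => [|a s IH].
  have -> : (fun t => \big[Order.min/x0]_(i <- [::]) F i t) = (fun=> x0).
    by apply: funext => t; rewrite big_nil.
  exact: cst_continuous.
have -> : (fun t => \big[Order.min/x0]_(i <- a :: s) F i t) =
   (F a \min (fun t => \big[Order.min/x0]_(i <- s) F i t)).
  by apply: funext => t; rewrite big_cons.
exact: continuous_min.
Qed.

Lemma le_sum_mem (I : eqType) (s : seq I) (F : I -> R) x :
  (forall i, 0 <= F i) -> x \in s -> F x <= \sum_(i <- s) F i.
Proof.
move=> F0; elim: s => [|a s IH] //; rewrite in_cons big_cons => /orP[/eqP ->|xs].
  by rewrite lerDl sumr_ge0.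
by apply: (le_trans (IH xs)); rewrite lerDr.
Qed.

Variable N : nat.
Variable A : 'M[R]_N.

Lemma rho_ge (t : R) : 0 <= t -> root (char_poly A) t -> t <= spectral_radius A.
Proof.
move=> t0 rt.
set S := [set complex.Re `|l| | l in [set l | eigenvalue (A ^ [eta real_complex R])%sesqui l]].
have eig : eigenvalue (A ^ [eta real_complex R])%sesqui (t%:C)%C.
  rewrite eigenvalue_root_char.
  have -> : (A ^ [eta real_complex R])%sesqui = (A ^ real_complex R)%sesqui by [].
  rewrite -map_char_poly; exact: rmorph_root.
have St : S t.
  by exists (t%:C)%C => //; rewrite ger0_norm // ler0c.
suff hS : has_sup S by exact: (sup_upper_bound hS St).
split; first by exists t.
pose cp := char_poly (A ^ real_complex R)%sesqui.
have [r hr] := closed_field_poly_normal cp.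
have mon : lead_coef cp = 1 by apply/monicP; exact: char_poly_monic.
exists (\sum_(z <- r) complex.Re `|z|).
move=> y [l eigl <-].
have lr : l \in r.
  move: eigl; rewrite /= eigenvalue_root_char.
  have -> : (A ^ [eta real_complex R])%sesqui = (A ^ real_complex R)%sesqui by [].
  by rewrite -/cp hr mon scale1r root_prod_XsubC.
apply: le_sum_mem lr => z; have := normr_ge0 z; by rewrite lecE => /andP[_].
Qed.

Lemma cpm_horner (t : R) l j : ((char_poly_mx A) l j).[t] = t *+ (l == j) - A l j.
Proof.
rewrite /char_poly_mx mxE [X in X + _]mxE mxE mxE.
by rewrite hornerD hornerN hornerMn hornerX hornerC.
Qed.

Definition Pj (j : 'I_N) : {poly R} := \sum_k (\adj (char_poly_mx A)) k j.
Arguments Pj : simpl never.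

Lemma key_identity (t : R) j :
  t * (Pj j).[t] - \sum_l (Pj l).[t] * A l j = (char_poly A).[t].
Proof.
have h := mul_adj_mx (char_poly_mx A).
have e k : \sum_l (\adj (char_poly_mx A)) k l * (char_poly_mx A) l j = (char_poly A) *+ (k == j).
  have := congr1 (fun M : 'M[{poly R}]_N => M k j) h.
  move=> /= hh. rewrite [in LHS]mxE [in RHS]mxE in hh. exact: hh.
have e2 : \sum_l Pj l * (char_poly_mx A) l j = char_poly A.
  rewrite /Pj.
  under eq_bigr do rewrite mulr_suml.
  rewrite exchange_big /=.
  under eq_bigr do rewrite e.
  by rewrite (bigD1 j) //= eqxx mulr1n big1 ?addr0 // => k /negbTE ->.
rewrite -e2 [RHS]horner_sum.
under [in RHS]eq_bigr do rewrite hornerM cpm_horner.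
have h1 : \sum_i (Pj i).[t] * (t *+ (i == j)) = t * (Pj j).[t].
  rewrite (bigD1 j) // eqxx mulr1n big1; first by rewrite Monoid.mulm1 mulrC.
  by move=> k /andP[_ /negbTE ->]; rewrite mulr0n mulr0.
transitivity (\sum_i ((Pj i).[t] * (t *+ (i == j)) - (Pj i).[t] * A i j)).
  by rewrite [RHS]sumrB h1.
by apply: eq_bigr => i _; rewrite [RHS]mulrBr.
Qed.


Lemma perron (mu : R) : 0 < mu -> spectral_radius A < mu -> (forall i j, 0 <= A i j) ->
  exists v : 'I_N -> R, (forall j, 0 < v j) /\ (forall j, \sum_i v i * A i j <= mu * v j).
Proof.
move=> mu0 rmu A0.
pose D := char_poly A.
have Dnz t : mu <= t -> D.[t] != 0.
  move=> mut; apply/negP => /eqP Dt.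
  have := @rho_ge t (ltW (lt_le_trans mu0 mut)); rewrite /root -/D Dt eqxx => /(_ isT).
  lra.
pose w t j := (Pj j).[t] / D.[t].
have wid t j : mu <= t -> t * w t j - \sum_l w t l * A l j = 1.
  move=> mut; have := key_identity t j; rewrite -/D /w => ki.
  under eq_bigr do rewrite mulrAC.
  by rewrite -mulr_suml mulrA -mulrBl ki divff // Dnz.
pose colsum j := \sum_l A l j.
have ineq t j : mu <= t -> (forall l, w t j <= w t l) -> 1 <= (t - colsum j) * w t j.
  move=> mut wmin.
  have h1 : \sum_l w t j * A l j <= \sum_l w t l * A l j.
    by apply: ler_sum => l _; apply: ler_wpM2r.
  rewrite -mulr_sumr -/(colsum j) in h1.
  have := wid t j mut; lra.
pose g t := \big[Order.min/1]_j w t j.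
have gle t j : g t <= w t j by exact: bigmin_le.
have gatt t : g t <= 0 -> exists j, g t = w t j.
  move=> gt0; case: (@bigmin_attained _ (index_enum 'I_N) (w t) 1) => [h|//].
  by move: gt0; rewrite /g h; lra.
pose T := mu + 1 + \sum_j colsum j.
have colsumT j : colsum j <= \sum_j colsum j.
  by rewrite (bigD1 j) //= lerDl; apply: sumr_ge0 => k _; apply: sumr_ge0.
have muT : mu <= T.
  rewrite /T -addrA lerDl; apply: addr_ge0 => //; apply: sumr_ge0 => k _; exact: sumr_ge0.
have gT : 0 < g T.
  rewrite ltNge; apply/negP => gT0; have [j gj] := gatt T gT0.
  have wmin l : w T j <= w T l by rewrite -gj; exact: gle.
  have hi := ineq T j muT wmin.
  have hw : w T j <= 0 by rewrite -gj.
  have hy : mu + 1 <= T - colsum j by have := colsumT j; rewrite /T; lra.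
  move: hi hy hw; move: (T - colsum j) (w T j) => y z; nra.
have gcont : {within `[mu, T], continuous g}.
  apply: continuous_in_subspaceT => x; rewrite inE /= in_itv /= => /andP[mux _].
  apply: cont_bigmin => j.
  apply: continuousM; first exact: continuous_horner.
  apply: continuousV; first exact: Dnz.
  exact: continuous_horner.
have gmu : 0 < g mu.
  rewrite ltNge; apply/negP => gmu0.
  have [|c cin gc] := IVT (v := 0) muT gcont.
    by rewrite ge_min gmu0 /= le_max (ltW gT) orbT.
  move: cin; rewrite in_itv /= => /andP[muc _].
  have gc0 : g c <= 0 by rewrite gc.
  have [j gj] := gatt c gc0.
  have wmin l : w c j <= w c l by rewrite -gj; exact: gle.
  have := ineq c j muc wmin; rewrite -gj gc mulr0; lra.
exists (w mu); split.
  by move=> j; exact: lt_le_trans gmu (gle mu j).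
move=> j; have := wid mu j (lexx mu); lra.
Qed.
End LA.

Section Main.
Variable R : realType.

Lemma prod_lb (a b al bt A0 B0 : R) : - al <= a -> a <= A0 -> - bt <= b -> b <= B0 ->
  0 <= al -> 0 <= bt -> 0 <= A0 -> 0 <= B0 -> - (A0 * bt + B0 * al) <= a * b.
Proof.
move=> ha1 ha2 hb1 hb2 al0 bt0 A00 B00.
case: (leP 0 a) => a0; case: (leP 0 b) => b0; nra.
Qed.

Lemma mvt_pos (f df : R -> R) (a b : R) : 0 < a -> a <= b ->
  (forall t : R, 0 < t -> is_derive t 1 f (df t)) ->
  exists2 c, a <= c <= b & f b - f a = df c * (b - a).
Proof.
move=> a0 ab hd.
have h1 : forall x, x \in `]a, b[ -> is_derive x 1 f (df x).
  move=> x; rewrite in_itv /= => /andP[ax _]; apply: hd; exact: lt_trans ax.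
have h2 : {within `[a, b], continuous f}.
  apply: continuous_in_subspaceT => x; rewrite inE /= in_itv /= => /andP[ax _].
  apply: (@deriv_cont R f x (df x)); apply: hd; exact: lt_le_trans ax.
have [c cin eq] := @MVT_segment R f df a b ab h1 h2.
by exists c => //; move: cin; rewrite in_itv.
Qed.
End Main.


Lemma sais_inv (R : realType) (N : nat) (A : 'M[R]_N) (beta0 betaa kappa delta : R)
  (p q : R -> 'I_N -> R) :
  adjacency01 A -> 0 < beta0 -> 0 < delta -> 0 < kappa -> 0 <= betaa ->
  SAIS_solution A beta0 betaa kappa delta p q -> feasible_state (p 0) (q 0) ->
  forall j t, 0 <= t -> [/\ 0 <= p t j, 0 <= q t j & 0 <= 1 - p t j - q t j].
Proof.
move=> [A01 Adiag] b0 d0 k0 ba0 sol feas.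
pose X t j := \sum_l A j l * p t l.
pose dP t j := beta0 * (1 - p t j - q t j) * X t j + betaa * q t j * X t j - delta * p t j.
pose dQ t j := kappa * (1 - p t j - q t j) * X t j - betaa * q t j * X t j.
have hp j (t : R) : 0 < t -> is_derive t 1 (fun s => p s j) (dP t j).
  by move=> t0; have [_ [_ [H _]]] := sol j; exact: H.
have hq j (t : R) : 0 < t -> is_derive t 1 (fun s => q s j) (dQ t j).
  by move=> t0; have [_ [_ [_ H]]] := sol j; exact: H.
have cp j : {within `[0, +oo[, continuous (fun s => p s j)}.
  by have [H _] := sol j.
have cq j : {within `[0, +oo[, continuous (fun s => q s j)}.
  by have [_ [H _]] := sol j.
have hs j (t : R) : 0 < t -> is_derive t 1 (fun s => 1 - p s j - q s j) (- dP t j - dQ t j).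
  move=> t0; have -> : - dP t j - dQ t j = 0 - dP t j - dQ t j by rewrite sub0r.
  apply: is_deriveB; last exact: hq.
  apply: is_deriveB; last exact: hp.

have cs j : {within `[0, +oo[, continuous (fun s => 1 - p s j - q s j)}.
  have -> : (fun s => 1 - p s j - q s j) =
    (((fun=> 1) + (fun s => - p s j)) + (fun s => - q s j)) by apply: funext.
  move=> x; apply: continuousD; last by apply: continuousN; exact: cq.
  apply: continuousD; last by apply: continuousN; exact: cp.
  exact: cst_continuous.
pose xx (k : ('I_N + 'I_N) + 'I_N) t := match k with
  | inl (inl j) => p t j | inl (inr j) => q t j | inr j => 1 - p t j - q t j end.
pose dxx (k : ('I_N + 'I_N) + 'I_N) t := match k with
  | inl (inl j) => dP t j | inl (inr j) => dQ t j | inr j => - dP t j - dQ t j end.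
pose Nr : R := N%:R.
have Nr0 : 0 <= Nr by rewrite /Nr ler0n.
pose L := (beta0 + betaa + kappa + delta) * (6 * Nr + 1).
have L0 : 0 <= L by rewrite /L mulr_ge0 //; lra.
have inv : forall k t, 0 <= t -> 0 <= xx k t.
  apply: (@invariance R _ xx dxx L L0).
  - by case=> [[j|j]|j]; [exact: cp | exact: cq | exact: cs].
  - by case=> [[j|j]|j] t t0; [exact: hp | exact: hq | exact: hs].
  - by case=> [[j|j]|j] /=; have [h1 [h2 h3]] := feas j => //; lra.
  move=> t t0 Hm k xk.
  set m := \sum_j @negp R (xx j t).
  have m0 : 0 <= m by apply: sumr_ge0 => j _; exact: negp_ge0.
  have lowm kk : - m <= xx kk t.
    have h1 := @negp_ge R (xx kk t).
    have h2 : @negp R (xx kk t) <= m.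
      by rewrite /m (bigD1 kk) // lerDl; apply: sumr_ge0 => j _; exact: negp_ge0.
    lra.
  have pm j : - m <= p t j := lowm (inl (inl j)).
  have qm j : - m <= q t j := lowm (inl (inr j)).
  have sm j : - m <= 1 - p t j - q t j := lowm (inr j).
  have p1 j : -1 <= p t j := Hm (inl (inl j)).
  have q1 j : -1 <= q t j := Hm (inl (inr j)).
  have s1 j : -1 <= 1 - p t j - q t j := Hm (inr j).
  have Xlo j : - (Nr * m) <= X t j.
    have : \sum_(l < N) (- m) <= X t j.
      apply: ler_sum => l _; case: (A01 j l) => ->; first by rewrite mul0r oppr_le0.
      by rewrite mul1r.
    by rewrite sumr_const card_ord -mulr_natr mulNr mulrC.
  have Xhi j : X t j <= 3 * Nr.
    have : X t j <= \sum_(l < N) 3.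
      apply: ler_sum => l _; case: (A01 j l) => ->; first by rewrite mul0r.
      by rewrite mul1r; have := q1 l; have := s1 l; lra.
    rewrite sumr_const card_ord -mulr_natr => h; apply: (le_trans h); rewrite /Nr; lra.
  have sX j : - (6 * Nr * m) <= (1 - p t j - q t j) * X t j.
    have h := @prod_lb R (1 - p t j - q t j) (X t j) m (Nr * m) 3 (3 * Nr) (sm j) _ (Xlo j) (Xhi j) m0.
    have e1 : 1 - p t j - q t j <= 3 by have := p1 j; have := q1 j; lra.
    have e2 : 0 <= Nr * m by rewrite mulr_ge0.
    have e3 : (0 : R) <= 3 by lra.
    have e4 : 0 <= 3 * Nr by rewrite mulr_ge0.
    have := h e1 e2 e3 e4; lra.
  have qX j : - (6 * Nr * m) <= q t j * X t j.
    have h := @prod_lb R (q t j) (X t j) m (Nr * m) 3 (3 * Nr) (qm j) _ (Xlo j) (Xhi j) m0.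
    have e1 : q t j <= 3 by have := p1 j; have := s1 j; lra.
    have e2 : 0 <= Nr * m by rewrite mulr_ge0.
    have e3 : (0 : R) <= 3 by lra.
    have e4 : 0 <= 3 * Nr by rewrite mulr_ge0.
    have := h e1 e2 e3 e4; lra.
  have nX (y : R) j : y < 0 -> -1 <= y -> - (Nr * m) <= (- y) * X t j.
    move=> y0 y1.
    have h := @prod_lb R (- y) (X t j) 0 (Nr * m) 1 (3 * Nr) _ _ (Xlo j) (Xhi j) (lexx 0).
    have e1 : - 0 <= - y by lra.
    have e2 : - y <= 1 by lra.
    have e3 : 0 <= Nr * m by rewrite mulr_ge0.
    have e4 : 0 <= 3 * Nr by rewrite mulr_ge0.
    have := h e1 e2 e3 ler01 e4; lra.
  have bm : 0 <= beta0 * m by rewrite mulr_ge0 // ltW.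
  have Nm0 : 0 <= Nr * m by rewrite mulr_ge0.
  have f1 : 0 <= beta0 * (Nr * m) by rewrite mulr_ge0 // ltW.
  have f2 : 0 <= betaa * (Nr * m) by rewrite mulr_ge0.
  have f3 : 0 <= kappa * (Nr * m) by rewrite mulr_ge0 // ltW.
  have f4 : 0 <= delta * (Nr * m) by rewrite mulr_ge0 // ltW.
  have g1 : 0 <= beta0 * m by rewrite mulr_ge0 // ltW.
  have g2 : 0 <= betaa * m by rewrite mulr_ge0.
  have g3 : 0 <= kappa * m by rewrite mulr_ge0 // ltW.
  have g4 : 0 <= delta * m by rewrite mulr_ge0 // ltW.
  case: k xk => [[j|j]|j] /= xk.
  - rewrite /dP /L.
    have h1 := ler_wpM2l (ltW b0) (sX j).
    have h2 := ler_wpM2l ba0 (qX j).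
    have h5 : 0 <= - (delta * p t j) by rewrite oppr_ge0 pmulr_rle0 // ltW.
    rewrite -!mulrA in h1 h2 *.
    lra.
  - rewrite /dQ /L.
    have h1 := ler_wpM2l (ltW k0) (sX j).
    have h2 := ler_wpM2l ba0 (nX (q t j) j xk (q1 j)).
    lra.
  - rewrite /dP /dQ /L.
    have h2 : 0 <= beta0 + kappa by lra.
    have h1 := ler_wpM2l h2 (nX (1 - p t j - q t j) j xk (s1 j)).
    have h5 := ler_wpM2l (ltW d0) (pm j).
    lra.
move=> j t t0; split.
- exact: (inv (inl (inl j)) t t0).
- exact: (inv (inl (inr j)) t t0).
- exact: (inv (inr j) t t0).
Qed.

Theorem theorem3 (R : realType) (N : nat) (A : 'M[R]_N)
    (beta0 betaa kappa delta : R) :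
  adjacency01 A ->
  0 < beta0 -> 0 < delta -> 0 < kappa -> 0 <= betaa -> betaa < beta0 ->
  (* beta_eq / delta < 1 / rho(A), written multiplicatively (rho(A) = 0 means 1/rho = +oo) *)
  beta_eq beta0 betaa kappa * spectral_radius A < delta ->
  exists eps : R, 0 < eps /\
    forall p q : R -> 'I_N -> R,
      SAIS_solution A beta0 betaa kappa delta p q ->
      feasible_state (p 0) (q 0) ->
      (forall i, p 0 i < eps) ->
      forall i, (fun t => p t i) @ +oo --> (0 : R).
Proof.
move=> A01' b0 d0 k0 ba0 bab hrho.
have [A01 Adiag] := A01'.
have A0 i j : 0 <= A i j by case: (A01 i j) => ->.
have A1 i j : A i j <= 1 by case: (A01 i j) => ->.
exists 1; split => // p q sol feas _ i.
set be := beta_eq beta0 betaa kappa in hrho *.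
have kb0 : 0 < kappa + betaa by lra.
have be_eq : be = (beta0 * betaa + betaa * kappa) / (kappa + betaa).
  rewrite /be /beta_eq; field.
  by rewrite lt0r_neq0 // lt0r_neq0.
have be0 : 0 <= be by rewrite be_eq divr_ge0 // ?addr_ge0 ?mulr_ge0 // ltW.
set rho := spectral_radius A in hrho *.
pose r0 := if 0 <= rho then rho else 0.
have r00 : 0 <= r0 by rewrite /r0; case: ifP.
have rr0 : rho <= r0 by rewrite /r0; case: ifP => // /negbT; rewrite -ltNge => /ltW.
have ber0 : be * r0 < delta by rewrite /r0; case: ifP => // _; rewrite mulr0.
pose mu := r0 + (delta - be * r0) / (2 * (be + 1)).
have gap0 : 0 < (delta - be * r0) / (2 * (be + 1)).
  by rewrite divr_gt0 ?subr_gt0 // mulr_gt0 //; lra.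
have mu0 : 0 < mu by rewrite /mu; lra.
have rhomu : rho < mu by rewrite /mu; lra.
have bemu : be * mu < delta.
  have hgap : (delta - be * r0) / (2 * (be + 1)) * (2 * (be + 1)) = delta - be * r0.
    by rewrite divfK // mulf_neq0 //; apply: lt0r_neq0; lra.
  move: hgap gap0; rewrite /mu; move: ((delta - be * r0) / (2 * (be + 1))) => x.
  nra.
have [v [vpos vA]] := @perron R N A mu mu0 rhomu A0.
have feasP := @sais_inv R N A beta0 betaa kappa delta p q A01' b0 d0 k0 ba0 sol feas.
pose X t j := \sum_l A j l * p t l.
pose dP t j := beta0 * (1 - p t j - q t j) * X t j + betaa * q t j * X t j - delta * p t j.
pose dQ t j := kappa * (1 - p t j - q t j) * X t j - betaa * q t j * X t j.
have hp j (t : R) : 0 < t -> is_derive t 1 (fun s => p s j) (dP t j).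
  by move=> t0; have [_ [_ [H _]]] := sol j; exact: H.
have hq j (t : R) : 0 < t -> is_derive t 1 (fun s => q s j) (dQ t j).
  by move=> t0; have [_ [_ [_ H]]] := sol j; exact: H.
pose Nr : R := N%:R.
have Xnn t j : 0 <= t -> 0 <= X t j.
  move=> t0; apply: sumr_ge0 => l _; apply: mulr_ge0 => //; by have [] := feasP l t t0.
have XN t j : 0 <= t -> X t j <= Nr.
  move=> t0; have : X t j <= \sum_(l < N) 1.
    apply: ler_sum => l _; have [h1 h2 h3] := feasP l t t0.
    by case: (A01 j l) => ->; rewrite ?mul0r ?mul1r //; lra.
  by rewrite sumr_const card_ord -mulr_natr mul1r.
pose c := - (beta0 - betaa) / (kappa + betaa).
have c0 : c <= 0 by rewrite /c mulNr oppr_le0 divr_ge0 // ltW // subr_gt0.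
have idc t j : dP t j + c * dQ t j = be * (1 - p t j) * X t j - delta * p t j.
  rewrite /dP /dQ /c be_eq; field; exact: lt0r_neq0.
pose W t := \sum_j v j * (p t j + c * q t j).
pose dW t := \sum_j v j * (be * (1 - p t j) * X t j - delta * p t j).
have hW (t : R) : 0 < t -> is_derive t 1 W (dW t).
  move=> t0.
  have e j : is_derive t 1 (fun s => v j * (p s j + c * q s j))
      (v j * (be * (1 - p t j) * X t j - delta * p t j)).
    rewrite -idc.
    have H := is_deriveZ (v j) (is_deriveD (hp j t t0) (is_deriveZ c (hq j t t0))).
    exact: H.
  have := is_derive_sum e; rewrite fct_sumE; exact.
pose Svp t := \sum_j v j * p t j.
have dWle t : 0 < t -> dW t <= (be * mu - delta) * Svp t.
  move=> t0; have t0' := ltW t0.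
  have s1 : dW t <= \sum_j v j * (be * X t j - delta * p t j).
    apply: ler_sum => j _; apply: ler_wpM2l; first exact: ltW (vpos j).
    have [h1 h2 h3] := feasP j t t0'; have := Xnn t j t0' => hx.
    have : 0 <= be * (p t j * X t j) by rewrite !mulr_ge0.
    lra.
  have s2 : \sum_j v j * X t j <= mu * Svp t.
    rewrite /X /Svp.
    under eq_bigr do rewrite mulr_sumr.
    rewrite exchange_big /= mulr_sumr; apply: ler_sum => l _.
    under eq_bigr do rewrite mulrA.
    rewrite -mulr_suml mulrA; apply: ler_wpM2r; last exact: vA.
    by have [] := feasP l t t0'.
  have s3 : \sum_j v j * (be * X t j - delta * p t j) =
      be * \sum_j v j * X t j - delta * Svp t.
    by rewrite /Svp !mulr_sumr -sumrB; apply: eq_bigr => j _; ring.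
  have := ler_wpM2l be0 s2; lra.
pose Sv := \sum_j v j.
have Wlo t : 0 <= t -> c * Sv <= W t.
  move=> t0; rewrite /Sv /W mulr_sumr; apply: ler_sum => j _.
  have [h1 h2 h3] := feasP j t t0; have := vpos j => hv.
  have hv0 : 0 <= v j := ltW hv.
  have : 0 <= v j * p t j by rewrite mulr_ge0.
  have : c * (v j * (1 - q t j)) <= 0.
    by apply: mulr_le0_ge0 => //; apply: mulr_ge0 => //; lra.
  lra.
have Whi t : 0 <= t -> W t <= Sv.
  move=> t0; rewrite /Sv /W; apply: ler_sum => j _.
  have [h1 h2 h3] := feasP j t t0; have := vpos j => hv.
  have hv0 : 0 <= v j := ltW hv.
  have : c * (v j * q t j) <= 0 by apply: mulr_le0_ge0 => //; apply: mulr_ge0.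
  have : v j * (1 - p t j) >= 0 by apply: mulr_ge0 => //; lra.
  lra.
have dPlo t j : 0 < t -> - delta <= dP t j.
  move=> t0; have t0' := ltW t0.
  have [h1 h2 h3] := feasP j t t0'; have hx := Xnn t j t0'.
  rewrite /dP.
  have : 0 <= beta0 * (1 - p t j - q t j) * X t j by rewrite !mulr_ge0 // ltW.
  have : 0 <= betaa * q t j * X t j by rewrite !mulr_ge0.
  have : delta * p t j <= delta * 1 by apply: ler_wpM2l; [exact: ltW | lra].
  lra.
have Svpge t : 0 <= t -> v i * p t i <= Svp t.
  move=> t0; rewrite /Svp (bigD1 i) //= lerDl; apply: sumr_ge0 => j _.
  by have [] := feasP j t t0; move=> *; rewrite mulr_ge0 // ltW.
have Wdec a b : 0 < a -> a <= b -> W b <= W a.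
  move=> a0 ab; have [x /andP[ax xb] eq] := @mvt_pos R W dW a b a0 ab hW.
  have x0 : 0 < x by exact: lt_le_trans ax.
  have sv0 : 0 <= Svp x.
    apply: le_trans (Svpge x (ltW x0)).
    by apply: mulr_ge0; [exact: ltW | have [] := feasP i x (ltW x0)].
  have dx0 : dW x <= 0.
    apply: le_trans (dWle x x0) _; apply: mulr_le0_ge0 => //; lra.
  have : dW x * (b - a) <= 0 by apply: mulr_le0_ge0 => //; lra.
  lra.
apply/cvgrPdist_lt => e e0.
suff [M [M0 HM]] : exists M, 0 <= M /\ forall t, M < t -> p t i < e.
  exists M; split; first exact: num_real.
  move=> t Mt; have t0 : 0 <= t by exact: le_trans M0 (ltW Mt).
  rewrite sub0r normrN ger0_norm; first exact: HM.
  by have [] := feasP i t t0.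
apply: contrapT => nH.
have bad M : 0 <= M -> exists t, M < t /\ e <= p t i.
  move=> M0; apply: contrapT => nb; apply: nH; exists M; split => // t Mt.
  rewrite ltNge; apply/negP => et; apply: nb; by exists t.
pose tau := e / (2 * delta).
have tau0 : 0 < tau by rewrite divr_gt0 // mulr_gt0.
have dtau : delta * tau = e / 2.
  by rewrite /tau; field; rewrite gt_eqF.
pose gam := delta - be * mu.
have gam0 : 0 < gam by rewrite /gam subr_gt0.
pose D0 := gam * (v i * (e / 2)) * tau.
have D00 : 0 < D0.
  have e2 : 0 < e / 2 by rewrite divr_gt0.
  by rewrite /D0 !mulr_gt0 // invr_gt0 mulr_gt0.
have step t : 1 <= t -> exists t', 1 <= t' /\ W t' <= W t - D0.
  move=> t1'.
  have [t1 [tt1 pe]] := bad t (le_trans ler01 t1').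
  have t0 : 0 < t by exact: lt_le_trans ltr01 t1'.
  have t10 : 0 < t1 by exact: lt_trans t0 tt1.
  have Wt1 : W t1 <= W t := Wdec t t1 t0 (ltW tt1).
  have hpu u : t1 <= u -> u <= t1 + tau -> e / 2 <= p u i.
    move=> h1 h2.
    have [x /andP[hx1 hx2] eq] := @mvt_pos R (fun s => p s i) (fun s => dP s i) t1 u t10 h1
      (fun s s0 => hp i s s0).
    have hd := dPlo x i (lt_le_trans t10 hx1).
    have h3 : - delta * (u - t1) <= dP x i * (u - t1) by apply: ler_wpM2r => //; lra.
    have h4 : delta * (u - t1) <= delta * tau by apply: ler_wpM2l; [exact: ltW | lra].
    lra.
  have tt : t1 <= t1 + tau by rewrite lerDl ltW.
  have [x /andP[hx1 hx2] eq] := @mvt_pos R W dW t1 (t1 + tau) t10 tt hW.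
  have x0 : 0 < x by exact: lt_le_trans t10 hx1.
  have px := hpu x hx1 hx2.
  have h1 := dWle x x0.
  have h2 := Svpge x (ltW x0).
  have h3 : v i * (e / 2) <= v i * p x i by apply: ler_wpM2l => //; exact: ltW.
  have h4 : dW x <= - gam * (v i * (e / 2)).
    apply: (le_trans h1); rewrite /gam opprB.
    have : (be * mu - delta) * Svp x <= (be * mu - delta) * (v i * (e / 2)).
      by apply: ler_wnM2l; lra.
    by [].
  have h5 : dW x * (t1 + tau - t1) <= - gam * (v i * (e / 2)) * (t1 + tau - t1).
    by apply: ler_wpM2r => //; lra.
  exists (t1 + tau); split; first by lra.
  move: h5 eq; rewrite /D0 addrAC subrr add0r => h5 eq; lra.
have iter (k : nat) : exists t, 1 <= t /\ W t <= W 1 - k%:R * D0.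
  elim: k => [|k [t [t1 ht]]]; first by exists 1; rewrite mul0r subr0.
  have [t' [t'1 ht']] := step t t1; exists t'; split => //.
  rewrite -addn1 natrD mulrDl mul1r; lra.
have Sv0 : 0 <= Sv by apply: sumr_ge0 => j _; exact: ltW.
pose B := (Sv - c * Sv) / D0.
have B0 : 0 <= B.
  rewrite /B divr_ge0 ?subr_ge0 //; last exact: ltW.
  have : c * Sv <= 0 by apply: mulr_le0_ge0.
  lra.
have hk := archi_boundP B0.
have [t [t1 ht]] := iter (Num.Def.archi_bound B).
have hBD : B * D0 = Sv - c * Sv by rewrite /B divfK // gt_eqF.
have hk2 : B * D0 < (Num.Def.archi_bound B)%:R * D0 by rewrite ltr_pM2r.
have := Wlo t (le_trans ler01 t1).
have := Whi 1 ler01.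
lra.
Qed.
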